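(* Let $\theta$ be a real treatment effect, $\delta$ a clinical margin, $c\in(0,1)$, $\pi_{\mathrm{a}}$ an analysis prior and $\pi_{\mathrm{d}}$ a design prior with $\gamma_1=\Pr_{\mathrm{d}}(\theta>\delta)$, $\gamma_0=1-\gamma_1$. With $\mathcal{S}=\mathbb{I}\{\Pr_{\mathrm{a}}(\theta>\delta\mid\mathcal{D})>c\}$ and probabilities under the joint model $\theta\sim\pi_{\mathrm{d}}$, $\mathcal{D}\mid\theta\sim f(\cdot\mid\theta)$, let $\beta_C(c)=\Pr(\mathcal{S}=1\mid\theta>\delta)$, $\alpha_B(c)=\Pr(\mathcal{S}=1\mid\theta\le\delta)$, $\mathrm{PID}(c)=\Pr(\theta\le\delta\mid\mathcal{S}=1)=\frac{\gamma_0\alpha_B(c)}{\gamma_0\alpha_B(c)+\gamma_1\beta_C(c)}$, and let $\alpha(c)=\Pr(\mathcal{S}=1\mid\theta=\delta)$ be the frequentist Type I error rate. Under large-sample settings (in which $\alpha(c)$ is identified with its large-sample limit $1-c$), for any $c\in(0,1)$, $$-(1-c)\le\mathrm{PID}(c)-\alpha(c)\le c,$$ and, at the limits of the prior probability of effectiveness, $$\lim_{\gamma_1\to1}\bigl[\mathrm{PID}(c)-\alpha(c)\bigr]=-(1-c),\qquad\lim_{\gamma_1\to0}\bigl[\mathrm{PID}(c)-\alpha(c)\bigr]=c.$$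
   Context: $\Pr_{\mathrm{a}}(\cdot\mid\mathcal{D})$ is the posterior under the analysis prior. In large samples (under regularity conditions for the Bernstein–von Mises theorem) the frequentist Type I error of this rule converges to $1-c$. In the limits, $\alpha_B(c)$ and $\beta_C(c)$ are regarded as positive quantities held fixed while $\gamma_1$ varies. *)

(* Defs.v *)
From mathcomp Require Import all_boot all_order all_algebra.
From mathcomp Require Import all_classical all_reals all_analysis.
Set Implicit Arguments. Unset Strict Implicit. Unset Printing Implicit Defensive.
Import Order.TTheory GRing.Theory Num.Theory.
Local Open Scope ring_scope.

Section PIDdefs.
Variable R : realType.

Definition gamma0 (gamma1 : R) : R := 1 - gamma1.

Definition PID (gamma1 alphaB betaC : R) : R :=
  gamma0 gamma1 * alphaB / (gamma0 gamma1 * alphaB + gamma1 * betaC).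

(* Frequentist Type I error alpha(c), identified (large-sample setting) with
   its Bernstein--von Mises limit 1 - c. *)
Definition alpha_ls (c : R) : R := 1 - c.
End PIDdefs.

(* Main.v *)
Require Import Defs.
From mathcomp Require Import all_boot all_order all_algebra.
From mathcomp Require Import all_classical all_reals all_analysis.
From mathcomp Require Import lra.
Import Order.TTheory GRing.Theory Num.Theory numFieldNormedType.Exports.
Local Open Scope ring_scope.
Local Open Scope classical_set_scope.

Lemma PID_cont (R : realType) (a b x0 : R) :
  gamma0 x0 * a + x0 * b != 0 ->
  PID g a b @[g --> x0] --> PID x0 a b.
Proof.
move=> h; rewrite /PID /gamma0.
have h1 : (1 - g) @[g --> x0] --> 1 - x0 .
  by apply: cvgB; [exact: cvg_cst | exact: cvg_id].
have h2 : g @[g --> x0] --> x0 := cvg_id.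
exact: (cvgM (cvgM h1 (cvg_cst a)) (cvgV h (cvgD (cvgM h1 (cvg_cst a)) (cvgM h2 (cvg_cst b))))).
Qed.

Theorem proposition4 (R : realType) (c : R) (hc0 : 0 < c) (hc1 : c < 1) :
  (forall gamma1 alphaB betaC : R,
      0 <= gamma1 <= 1 -> 0 <= alphaB <= 1 -> 0 <= betaC <= 1 ->
      0 < gamma0 gamma1 * alphaB + gamma1 * betaC ->
      - (1 - c) <= PID gamma1 alphaB betaC - alpha_ls c <= c)
  /\
  (forall alphaB betaC : R,
      0 < alphaB <= 1 -> 0 < betaC <= 1 ->
      ((PID g alphaB betaC - alpha_ls c) @[g --> (1:R)^'-] --> (- (1 - c) : R))
      /\ ((PID g alphaB betaC - alpha_ls c) @[g --> (0:R)^'+] --> (c : R))).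
Proof.
split.
  move=> g a b /andP[g0 g1] /andP[a0 a1] /andP[b0 b1] hD.
  have hP0 : 0 <= PID g a b.
    rewrite /PID /gamma0; apply: divr_ge0; last exact: ltW.
    apply: mulr_ge0 => //; lra.
  have hP1 : PID g a b <= 1.
    rewrite /PID ler_pdivrMr //; have := mulr_ge0 g0 b0; nra.
  rewrite /alpha_ls; apply/andP; split; lra.
move=> a b /andP[a0 a1] /andP[b0 b1]; rewrite /alpha_ls.
have P1 : PID 1 a b = 0 by rewrite /PID /gamma0 subrr !mul0r.
have P0 : PID 0 a b = 1.
  by rewrite /PID /gamma0 subr0 !mul1r mul0r addr0 divff // gt_eqF.
split.
  have H : PID g a b - (1 - c) @[g --> (1:R)^'-] --> PID 1 a b - (1 - c).
    apply: cvg_at_left_filter; apply: cvgB; last exact: cvg_cst.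
    apply: PID_cont.
    by rewrite /gamma0 subrr mul0r add0r mul1r gt_eqF.
  by rewrite P1 sub0r in H.
have H : PID g a b - (1 - c) @[g --> (0:R)^'+] --> PID 0 a b - (1 - c).
  apply: cvg_at_right_filter; apply: cvgB; last exact: cvg_cst.
  apply: PID_cont.
  by rewrite /gamma0 subr0 mul1r mul0r addr0 gt_eqF.
by rewrite P0 subKr in H.
Qed.
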